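(* Let $m,n\in\mathbb N$ and $1\le q<\infty$, with $q'$ the conjugate exponent ($1/q+1/q'=1$). For each complex matrix $a=(a_{\mathbf i})_{\mathbf i\in\mathcal M(m,n)}$, \[\|a\|_{\ell_{\frac{qm}{(q-1)m+1},1}}\le m^{1/q}\sum_{k=1}^m\|a\|_{\ell_1(\{k\})[\ell_{q'}(\widehat{\{k\}})]}.\]
   Context: $\mathcal M(m,n)=\{(i_1,\dots,i_m):1\le i_k\le n\}$. For $k\in\{1,\dots,m\}$, $\widehat{\{k\}}=\{1,\dots,m\}\setminus\{k\}$, and $\mathcal M(\widehat{\{k\}},n)$ is the set of maps $\mathbf i:\widehat{\{k\}}\to\{1,\dots,n\}$; for $j\in\{1,\dots,n\}$ and $\mathbf i\in\mathcal M(\widehat{\{k\}},n)$, $j\oplus\mathbf i\in\mathcal M(m,n)$ equals $j$ at position $k$ and $\mathbf i$ elsewhere. Then $\|a\|_{\ell_1(\{k\})[\ell_{r}(\widehat{\{k\}})]}=\sum_{j=1}^n\big(\sum_{\mathbf i\in\mathcal M(\widehat{\{k\}},n)}|a_{j\oplus\mathbf i}|^{r}\big)^{1/r}$ (with the inner sum replaced by a max when $r=\infty$). For finite $I$ and $1\le p<\infty$, $\|x\|_{\ell_{p,1}(I)}=\sum_k x_k^*(k^{1/p}-(k-1)^{1/p})$, $x^*$ the non-increasing rearrangement of $(|x_i|)$. *)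

(* Defs.v *)
From HB Require Import structures.
From mathcomp Require Import all_boot all_order all_algebra.
From mathcomp Require Import all_classical all_reals.
From mathcomp Require Import exp.
From mathcomp Require complex.

Set Implicit Arguments.
Unset Strict Implicit.
Unset Printing Implicit Defensive.
Import Order.TTheory GRing.Theory Num.Theory.
Local Open Scope ring_scope.

Notation Cplx R := (complex.complex R).
Definition cmod {R : realType} (z : Cplx R) : R := complex.ComplexField.Normc.normc z.

(* M(m,n) = maps {1..m} -> {1..n}, realised as 'I_m -> 'I_n. *)
Definition multi_index (m n : nat) := {ffun 'I_m -> 'I_n}.

Definition hat_index (m n : nat) (k : 'I_m) :=
  {ffun {l : 'I_m | l != k} -> 'I_n}.

(* j (+) i : equals j at position k and i elsewhere. *)
Definition oplus_index (m n : nat) (k : 'I_m) (j : 'I_n)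
  (i : hat_index n k) : multi_index m n :=
  [ffun l : 'I_m => match insub l : option {l : 'I_m | l != k} with
                    | Some l' => i l'
                    | None => j end].

Definition conj_exp {R : realType} (q : R) : \bar R :=
  if q == 1 then (+oo)%E else (q / (q - 1))%:E.

Definition mixed_norm {R : realType} (m n : nat) (k : 'I_m) (r : \bar R)
  (a : multi_index m n -> Cplx R) : R :=
  \sum_(j : 'I_n)
    match r with
    | r'%:E => (\sum_(i : hat_index n k) cmod (a (oplus_index j i)) `^ r')
                 `^ (r'^-1)
    | +oo%E => \big[Num.max/0]_(i : hat_index n k) cmod (a (oplus_index j i))
    | -oo%E => 0
    end.

Definition decr_rearr {R : realType} (I : finType) (x : I -> R) : seq R :=
  sort (fun u v : R => v <= u) [seq `|x i| | i <- enum I].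

Definition lorentz_p1 {R : realType} (I : finType) (p : R) (x : I -> R) : R :=
  let s := decr_rearr x in
  \sum_(k < size s) s`_k * ((k.+1)%:R `^ p^-1 - (k%:R) `^ p^-1).

(* Main.v *)
Require Import Defs.
From HB Require Import structures.
From mathcomp Require Import all_boot all_order all_algebra.
From mathcomp Require Import all_classical all_reals.
From mathcomp Require Import exp.
From mathcomp Require Import ring lra.
Set Implicit Arguments.
Unset Strict Implicit.
Unset Printing Implicit Defensive.
Import Order.TTheory GRing.Theory Num.Theory.
Local Open Scope ring_scope.

Definition ev (m n : nat) (e : multi_index m n) (l : 'I_m) : 'I_n :=
  (e : {ffun 'I_m -> 'I_n}) l.

Definition restr (m n : nat) (k : 'I_m) (e : multi_index m n) : hat_index n k :=
  [ffun l => ev e (val l)].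

Lemma oplus_k m n (k : 'I_m) (j : 'I_n) (i : hat_index n k) :
  ev (oplus_index j i) k = j.
Proof. by rewrite /ev /oplus_index ffunE insubN // negbK. Qed.

Lemma restr_oplus m n (k : 'I_m) (j : 'I_n) (i : hat_index n k) :
  restr k (oplus_index j i) = i.
Proof.
apply/ffunP => l; rewrite /restr /ev !ffunE insubT ?(valP l) //= => h.
by congr (i _); apply: val_inj.
Qed.

Lemma oplus_restr m n (k : 'I_m) (e : multi_index m n) :
  oplus_index (ev e k) (restr k e) = e.
Proof.
apply/ffunP => l; rewrite /oplus_index ffunE.
case: insubP => [l' hl <-|]; first by rewrite /restr ffunE.
by rewrite negbK => /eqP ->.
Qed.

Lemma sum_oplus (R : realType) m n (k : 'I_m) (g : multi_index m n -> R) :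
  \sum_e g e = \sum_(j < n) \sum_(i : hat_index n k) g (oplus_index j i).
Proof.
rewrite pair_big /=.
rewrite (reindex (fun p : 'I_n * hat_index n k => oplus_index p.1 p.2)) //=.
exists (fun e => (ev e k, restr k e)) => [[j i] _|e _] /=.
  by rewrite oplus_k restr_oplus.
by rewrite oplus_restr.
Qed.

Lemma cmod_ge0 (R : realType) (z : Cplx R) : 0 <= cmod z.
Proof. by case: z => x y; rewrite /cmod /=; apply: sqrtr_ge0. Qed.

Lemma young01 (R : realType) (h al : R) : 0 <= h -> 0 < al <= 1 ->
  h `^ al <= al * h + (1 - al).
Proof.
move=> h0 /andP[a0 a1].
have [->|al1] := eqVneq al 1; first by rewrite powRr1 // mul1r subrr addr0.
have a1' : al < 1 by rewrite lt_neqAle al1.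
have := @conjugate_powR R (h `^ al) 1 (al^-1) ((1 - al)^-1) (powR_ge0 _ _) ler01.
rewrite invr_gt0 a0 invr_gt0 subr_gt0 a1' !invrK => /(_ isT isT).
rewrite addrC subrK => /(_ erefl).
by rewrite mulr1 -powRrM mulfV ?gt_eqF // powRr1 // powR1 mul1r [h * _]mulrC.
Qed.

Lemma diff_bound (R : realType) (th : R) (k : nat) : 0 < th <= 1 ->
  (k.+1)%:R `^ th - k%:R `^ th <= (k.+1)%:R `^ (th - 1).
Proof.
move=> /andP[t0 t1].
set x : R := (k.+1)%:R.
have x0 : 0 < x by rewrite /x ltr0n.
set h : R := k%:R / x.
have h0 : 0 <= h by rewrite /h divr_ge0 // ltW.
have hk : k%:R = x * h by rewrite /h mulrC divfK ?gt_eqF.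
have hh : h <= h `^ th.
  have [->|hn0] := eqVneq h 0; first by rewrite powR_ge0.
  apply: ger1_powR => //; rewrite lt_neqAle eq_sym hn0 h0 /= /h.
  by rewrite ler_pdivrMr // mul1r /x ler_nat.
have xn0 : x != 0 by rewrite gt_eqF.
rewrite hk powRM ?(ltW x0) // powRB ?xn0 ?implybT // powRr1 ?(ltW x0) //.
have -> : x `^ th / x = x `^ th - x `^ th * h.
  rewrite /h; have -> : x = k%:R + 1 by rewrite /x -natr1.
  have k1 : (k%:R + 1 : R) != 0 by rewrite natr1 pnatr_eq0.
  by field.
by rewrite lerD2l lerN2 ler_wpM2l // powR_ge0.
Qed.

Lemma bern (R : realType) (al c : R) : 0 < al <= 1 -> 0 <= c ->
  al * (c + 1) `^ (al - 1) <= (c + 1) `^ al - c `^ al.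
Proof.
move=> ha c0; have /andP[a0 a1] := ha.
set x := c + 1.
have x0 : 0 < x by rewrite /x ltr_wpDl.
have xn0 : x != 0 by rewrite gt_eqF.
set h := c / x.
have h0 : 0 <= h by rewrite /h divr_ge0 // ltW.
have hc : c = x * h by rewrite /h mulrC divfK.
rewrite [in X in _ <= _ - X]hc powRM ?(ltW x0) // powRB ?xn0 ?implybT // powRr1 ?(ltW x0) //.
have hy := young01 h0 ha.
have -> : al * (x `^ al / x) = x `^ al - x `^ al * (al * h + (1 - al)).
  rewrite /h /x; have cn0 : c + 1 != 0 by rewrite -/x.
  by field.
by rewrite lerD2l lerN2 ler_wpM2l // powR_ge0.
Qed.

Lemma rho_mono (R : realType) (al c d : R) : al <= 1 -> 0 <= c -> c <= d ->
  (d + 1) `^ (al - 1) <= (c + 1) `^ (al - 1).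
Proof.
move=> a1 c0 cd.
have -> : al - 1 = - (1 - al) by rewrite opprB.
rewrite !powRN lef_pV2 ?posrE ?powR_gt0 ?ltr_wpDl //; last first.
  by apply: le_trans cd.
apply: ge0_ler_powR; rewrite ?subr_ge0 ?nnegrE ?addr_ge0 ?lerD2r //.
by apply: le_trans cd.
Qed.

Definition rho (R : realType) (m k : nat) : R :=
  (k.+1)%:R `^ ((m%:R : R)^-1 - 1).

Lemma rho_ge0 (R : realType) m k : 0 <= rho R m k.
Proof. exact: powR_ge0. Qed.

Lemma rho_sum (R : realType) (m N : nat) (b : nat -> bool) : (1 <= m)%N ->
  \sum_(k < N) (b k)%:R * rho R m k
  <= m%:R * (\sum_(k < N) ((b k)%:R : R)) `^ ((m%:R : R)^-1).
Proof.
move=> hm.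
have m0 : (0 : R) < m%:R by rewrite ltr0n.
have ha : 0 < (m%:R : R)^-1 <= 1.
  by rewrite invr_gt0 m0 /= invf_le1 // ler1n.
elim: N => [|N IH].
  by rewrite !big_ord0; apply: mulr_ge0; [exact: ler0n|exact: powR_ge0].
rewrite !big_ord_recr /=.
set c := \sum_(k < N) ((b k)%:R : R).
have c0 : 0 <= c by rewrite /c sumr_ge0 // => i _; exact: ler0n.
have cN : c <= N%:R.
  rewrite /c -[N in X in _ <= X]card_ord -sum1_card natr_sum ler_sum // => i _.
  by case: (b i).
case: (b N) => /=; last by rewrite mul0r !addr0.
rewrite mul1r.
apply: (le_trans (lerD IH (lexx _))).
have h1 : rho R m N <= m%:R * ((c + 1) `^ (m%:R^-1) - c `^ (m%:R^-1)).
  apply: (le_trans (y := (c + 1) `^ (m%:R^-1 - 1))).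
    by rewrite /rho -natr1; apply: rho_mono => //; case/andP: ha.
  have := bern ha c0; rewrite -(ler_pM2l m0) mulrA mulfV ?gt_eqF // mul1r.
  done.
apply: (le_trans (lerD (lexx _) h1)).
by rewrite -mulrDr addrCA subrr addr0.
Qed.

Definition Fmax (R : realType) (m n : nat) (v : multi_index m n -> R) : R :=
  \sum_(k < m) \sum_(j < n) \big[Num.max/0]_(i : hat_index n k) v (oplus_index j i).

Lemma Fmax_ge0 (R : realType) m n (v : multi_index m n -> R) : 0 <= Fmax v.
Proof.
by apply: sumr_ge0 => k _; apply: sumr_ge0 => j _; apply: bigmax_ge_id.
Qed.

Lemma card_bigcup_le (T : finType) m (F : 'I_m -> {set T}) :
  (#|\bigcup_(k < m) F k| <= \sum_(k < m) #|F k|)%N.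
Proof.
pose K := fun (X : {set T}) (y : nat) => (#|X| <= y)%N.
change (K (\bigcup_(k < m) F k) (\sum_(k < m) #|F k|)%N).
apply: (@big_rec2 {set T} nat (fun X y => is_true (K X y))); first by rewrite /K cards0.
move=> i X y _; rewrite /K => hX; apply: leq_trans (leq_card_setU _ _) _.
by rewrite leq_add2l.
Qed.

Lemma card_bound (R : realType) m n (A : {set multi_index m n}) : (1 <= m)%N ->
  (#|A|%:R : R) `^ ((m%:R : R)^-1)
  <= \sum_(k < m) (#|[set ev e k | e in A]|%:R : R).
Proof.
move=> hm.
set U := \bigcup_(k < m) [set ev e k | e in A].
have h1 : (#|A| <= #|U| ^ m)%N.
  apply: (leq_trans (n := #|(ffun_on U : {pred {ffun 'I_m -> 'I_n}})|)); last first.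
    by rewrite card_ffun_on card_ord.
  apply: subset_leq_card; apply/fintype.subsetP => e he.
  rewrite inE; apply/forallP => l /=; apply/finset.bigcupP; exists l => //.
  by apply/imsetP; exists e.
have h2 := card_bigcup_le (fun k => [set ev e k | e in A]).
rewrite -/U in h2.
set P := (\sum_(k < m) #|[set ev e k | e in A]|)%N in h2.
have h3 : (#|A| <= P ^ m)%N by apply: leq_trans h1 _; rewrite leq_exp2r.
rewrite -natr_sum -/P.
have m0 : (m%:R : R) != 0 by rewrite pnatr_eq0 -lt0n.
apply: (le_trans (y := ((P ^ m)%N%:R : R) `^ ((m%:R : R)^-1))).
  by apply: ge0_ler_powR; rewrite ?invr_ge0 ?ler0n ?nnegrE ?ler0n ?ler_nat.
by rewrite natrX -powR_mulrn ?ler0n // -powRrM mulfV // powRr1 ?ler0n.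
Qed.

Lemma hyper (R : realType) m n (v v' : multi_index m n -> R) (t : R)
  (A : {set multi_index m n}) (k : 'I_m) (j : 'I_n) :
  0 <= t -> (forall e, 0 <= v e) -> (forall e, 0 <= v' e) ->
  (forall e, e \in A -> t <= v e) ->
  (forall e, e \in A -> v' e = v e - t) -> (forall e, e \notin A -> v' e = 0) ->
  t * (j \in [set ev e k | e in A])%:R
    + \big[Num.max/0]_(i : hat_index n k) v' (oplus_index j i)
  <= \big[Num.max/0]_(i : hat_index n k) v (oplus_index j i).
Proof.
move=> t0 v0 v'0 hA hA' hnA.
set M := \big[Num.max/0]_(i : hat_index n k) v (oplus_index j i).
have hM : forall i : hat_index n k, v (oplus_index j i) <= M.
  by move=> i; apply: le_bigmax.

have M0 : 0 <= M by apply: bigmax_ge_id.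
case: (boolP (j \in _)) => hj /=.
  case/imsetP: hj => e he hje; subst j.
  have tM : t <= M.
    apply: (le_trans (hA _ he)); have := hM (restr k e).
    by rewrite oplus_restr.
  rewrite mulr1 addrC -lerBrDr; apply: bigmax_le; first by rewrite subr_ge0.
  move=> i _; case: (boolP (oplus_index (ev e k) i \in A)) => hi.
    by rewrite hA' // lerD2r hM.
  by rewrite hnA // subr_ge0.
rewrite mulr0 add0r; apply: bigmax_le => // i _.
case: (boolP (oplus_index j i \in A)) => hi.
  by rewrite hA' // lerBlDr (le_trans (hM i)) // lerDl.
by rewrite hnA.
Qed.

Lemma sum_ind (T : finType) (P : pred T) : (\sum_i (P i : nat))%N = #|P|.
Proof.
rewrite -sum1_card [RHS]big_mkcond /=; apply: eq_bigr => i _.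
by rewrite unfold_in; case: (P i).
Qed.

Lemma stepE (R : realType) m n N (tau : nat -> multi_index m n) :
  (1 <= m)%N ->
  (forall k1 k2, (k1 < N)%N -> (k2 < N)%N -> tau k1 = tau k2 -> k1 = k2) ->
  forall v : multi_index m n -> R, (forall e, 0 <= v e) ->
  \sum_(k < N) v (tau k) * rho R m k <= m%:R * Fmax v.
Proof.
move=> hm hinj v.
have [c] := ubnP #|[set e | v e != 0]|.
elim: c v => // c IH v hc v0.
set A := [set e | v e != 0] in hc.
have m0 : (0 : R) <= m%:R by apply: ler0n.
case: (set_0Vmem A) => [A0|[e1 he1]].
  have z : forall e, v e = 0.
    move=> e; apply/eqP; apply: contraT => h.
    have : e \in A by rewrite inE.
    by rewrite A0 inE.
  rewrite big1 ?(mulr_ge0 m0 (Fmax_ge0 _)) // => k _.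
  by rewrite z mul0r.
have hb : forall e, e \in A -> v e <= \sum_e' v e'.
  by move=> e _; rewrite (bigD1 e) //= lerDl sumr_ge0.
have [e0 he0 hmin] := @eq_bigmin _ _ _ (\sum_e v e) e1 (fun e => e \in A) v he1 hb.
have he0' : e0 \in A by exact: he0.
set t := v e0.
have tle : forall e, e \in A -> t <= v e.
  by move=> e he; rewrite /t -hmin; apply: bigmin_le_cond.
have t0 : 0 < t by rewrite lt_def v0 andbT; move: he0'; rewrite inE.
pose v' := fun e => if e \in A then v e - t else 0.
have v'0 : forall e, 0 <= v' e.
  by move=> e; rewrite /v'; case: ifP => h //; rewrite subr_ge0 tle.
have hA' : forall e, e \in A -> v' e = v e - t by move=> e he; rewrite /v' he.
have hnA : forall e, e \notin A -> v' e = 0 by move=> e he; rewrite /v' (negbTE he).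
have hc' : (#|[set e | v' e != 0%R]| < c)%N.
  have : [set e | v' e != 0%R] \proper A.
    apply/properP; split.
      apply/fintype.subsetP => e; rewrite inE; apply: contraR => he.
      by rewrite hnA.
    by exists e0 => //; rewrite inE hA' // subrr eqxx.
  by move/proper_card => h; apply: leq_trans h _.
have IH' := IH v' hc' v'0.
have split : \sum_(k < N) v (tau k) * rho R m k =
  t * \sum_(k < N) (tau k \in A)%:R * rho R m k
  + \sum_(k < N) v' (tau k) * rho R m k.
  rewrite mulr_sumr -big_split; apply: eq_bigr => k _ /=.
  case: (boolP (tau k \in A)) => h.
    by rewrite hA' //=; ring.
  have : v (tau k) = 0 by apply/eqP; move: h; rewrite inE negbK.
  by move=> ->; rewrite hnA //= !mul0r mulr0 addr0.
rewrite split.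
set J := \sum_(l < m) (#|[set ev e l | e in A]|%:R : R).
have hX : \sum_(k < N) (tau k \in A)%:R * rho R m k <= m%:R * J.
  apply: (le_trans (rho_sum R N (fun k => tau k \in A) hm)).
  rewrite ler_wpM2l //; apply: le_trans (card_bound R A hm).
  apply: ge0_ler_powR; first by rewrite invr_ge0 ler0n.
  - by rewrite nnegrE sumr_ge0 // => i _; exact: ler0n.
  - by rewrite nnegrE ler0n.
  rewrite -natr_sum ler_nat.
  have -> : (\sum_(k < N) (tau k \in A : nat))%N = #|[pred k : 'I_N | tau k \in A]|.
    by rewrite -sum_ind.
  rewrite -(@card_in_imset _ _ (fun k : 'I_N => tau k)); last first.
    by move=> x y _ _ /hinj h; apply: val_inj; apply: h.
  apply: subset_leq_card; apply/fintype.subsetP => e /imsetP [k hk ->].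
  by move: hk; rewrite inE.
apply: (le_trans (lerD (ler_wpM2l (ltW t0) hX) IH')).
rewrite mulrCA -mulrDr ler_wpM2l //.
rewrite /J /Fmax mulr_sumr -big_split ler_sum // => l _ /=.
rewrite -sum_ind natr_sum mulr_sumr -big_split ler_sum // => j _ /=.
have := hyper l j (ltW t0) v0 v'0 tle hA' hnA.
by rewrite [in X in X -> _]unfold_in.
Qed.

Lemma theta_facts (R : realType) (m : nat) (q : R) : (1 <= m)%N -> 1 <= q ->
  let th := (q * m%:R / ((q - 1) * m%:R + 1))^-1 in
  0 < th <= 1 /\ th - 1 = ((m%:R : R)^-1 - 1) * q^-1.
Proof.
move=> hm hq th.
have m1 : (1 : R) <= m%:R by rewrite ler1n.
have m0 : (m%:R : R) != 0 by rewrite pnatr_eq0 -lt0n.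
have q0 : q != 0 by rewrite gt_eqF // (lt_le_trans ltr01).
have d0 : 0 < (q - 1) * m%:R + 1.
  by rewrite ltr_wpDl // mulr_ge0 ?subr_ge0 // ler0n.
have thE : th = ((q - 1) * m%:R + 1) / (q * m%:R) by rewrite /th invf_div.
have qm0 : 0 < q * m%:R by rewrite mulr_gt0 // (lt_le_trans ltr01).
split.
  apply/andP; split; first by rewrite thE divr_gt0.
  rewrite thE ler_pdivrMr // mul1r mulrBl mul1r; lra.
rewrite thE; field.
by rewrite q0 m0.
Qed.

Lemma lhs_reduce (R : realType) (m n : nat) (q : R) (a : multi_index m n -> Cplx R)
  (e0 : multi_index m n) : (1 <= m)%N -> 1 <= q ->
  exists N (tau : nat -> multi_index m n),
    (forall k1 k2, (k1 < N)%N -> (k2 < N)%N -> tau k1 = tau k2 -> k1 = k2) /\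
    lorentz_p1 (q * m%:R / ((q - 1) * m%:R + 1)) (fun i => cmod (a i))
    <= \sum_(k < N) cmod (a (tau k)) * rho R m k `^ q^-1.
Proof.
move=> hm hq.
have [/andP[th0 th1] thE] := theta_facts hm hq.
rewrite /lorentz_p1 /decr_rearr.
set t := [seq `|cmod (a i)| | i <- enum (multi_index m n)].
have [Is hIs hs] := perm_iota_sort (fun x y : R => y <= x) 0 t.
rewrite hs.
set N := size t.
have sIs : size Is = N by rewrite (perm_size hIs) size_iota.
have Ilt : forall k, (k < N)%N -> (nth 0%N Is k < N)%N.
  move=> k hk; have : nth 0%N Is k \in iota 0 N.
    by rewrite -(perm_mem hIs) mem_nth // sIs.
  by rewrite mem_iota.
have sN : size (enum (multi_index m n)) = N by rewrite /N /t size_map.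
exists N, (fun k => nth e0 (enum (multi_index m n)) (nth 0%N Is k)); split.
  move=> k1 k2 h1 h2 /eqP; rewrite nth_uniq ?sN ?Ilt ?enum_uniq //.
  move/eqP/eqP; rewrite nth_uniq ?sIs // ?(perm_uniq hIs) ?iota_uniq //.
  by move/eqP.
rewrite size_map sIs; apply: ler_sum => k _.
rewrite (nth_map 0%N) ?sIs // /t (nth_map e0) ?sN ?Ilt //.
rewrite ger0_norm ?cmod_ge0 //.
rewrite ler_wpM2l ?cmod_ge0 //.
rewrite /rho -powRrM -thE.
by apply: diff_bound; apply/andP; split.
Qed.

Lemma injsum (R : realType) m n N (tau : nat -> multi_index m n)
  (w : multi_index m n -> R) :
  (forall k1 k2, (k1 < N)%N -> (k2 < N)%N -> tau k1 = tau k2 -> k1 = k2) ->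
  (forall e, 0 <= w e) ->
  \sum_(k < N) w (tau k) <= \sum_e w e.
Proof.
move=> hinj w0.
have hi : {in [set: 'I_N] &, injective (fun k : 'I_N => tau k)}.
  by move=> x y _ _ /hinj h; apply: val_inj; apply: h.
rewrite (_ : \sum_(k < N) w (tau k) = \sum_(k : 'I_N | k \in [set: 'I_N]) w (tau k)); last first.
  by apply: eq_bigl => k; rewrite inE.
rewrite -(big_imset _ hi).
by rewrite [X in _ <= X](bigID (mem [set tau (val k) | k in [set: 'I_N]])) /= lerDl sumr_ge0.
Qed.

Lemma mixed_norm_ge0 (R : realType) m n (k : 'I_m) r (a : multi_index m n -> Cplx R) :
  0 <= mixed_norm k r a.
Proof.
rewrite /mixed_norm; apply: sumr_ge0 => j _; case: r => [r||] //.
  exact: powR_ge0.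
exact: bigmax_ge_id.
Qed.

Lemma stepQ (R : realType) m n (q : R) (a : multi_index m n -> Cplx R) N
  (tau : nat -> multi_index m n) :
  (1 <= m)%N -> 1 < q ->
  (forall k1 k2, (k1 < N)%N -> (k2 < N)%N -> tau k1 = tau k2 -> k1 = k2) ->
  \sum_(k < N) cmod (a (tau k)) * rho R m k `^ q^-1
  <= m%:R `^ q^-1 * \sum_(k < m) mixed_norm k (conj_exp q) a.
Proof.
move=> hm hq hinj.
have q0 : 0 < q by apply: lt_trans hq.
have qn0 : q != 0 by rewrite gt_eqF.
have qn1 : q != 1 by rewrite gt_eqF.
have q1 : 0 < q - 1 by rewrite subr_gt0.
have q1n0 : q - 1 != 0 by rewrite gt_eqF.
set r := q / (q - 1).
have r0 : 0 < r by rewrite divr_gt0.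
have rn0 : r != 0 by rewrite gt_eqF.
have qr : q^-1 + r^-1 = 1.
  rewrite /r invf_div; field.
  exact: qn0.
have m0 : (0 : R) < m%:R by rewrite ltr0n.
have mn0 : (m%:R : R) != 0 by rewrite gt_eqF.
pose u := fun e => cmod (a e).
have u0 : forall e, 0 <= u e by move=> e; exact: cmod_ge0.
pose beta := fun (k : 'I_m) (j : 'I_n) =>
  (\sum_(i : hat_index n k) u (oplus_index j i) `^ r) `^ r^-1.
have hS : \sum_(k < m) mixed_norm k (conj_exp q) a
          = \sum_(k < m) \sum_(j < n) beta k j.
  by rewrite /conj_exp (negbTE qn1).
rewrite hS; set S := \sum_(k < m) \sum_(j < n) beta k j.
have b0 : forall k j, 0 <= beta k j by move=> k j; exact: powR_ge0.
have bS : forall k j, beta k j <= S.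
  move=> k j.
  have h1 : beta k j <= \sum_(j0 < n) beta k j0.
    by rewrite (bigD1 j) //= lerDl sumr_ge0.
  apply: le_trans h1 _.
  rewrite /S (bigD1 k) //= lerDl sumr_ge0 // => i _.
  exact: sumr_ge0.
have S0 : 0 <= S by rewrite sumr_ge0 // => k _; exact: sumr_ge0.
have ub : forall e k, u e <= beta k (ev e k).
  move=> e k; rewrite /beta.
  have h : u e `^ r <= \sum_(i : hat_index n k) u (oplus_index (ev e k) i) `^ r.
    rewrite (bigD1 (restr k e)) //= oplus_restr lerDl sumr_ge0 // => i _.
    exact: powR_ge0.
  have ri0 : 0 <= r^-1 by rewrite invr_ge0 ltW.
  have hx : u e `^ r \in Num.nneg by rewrite nnegrE powR_ge0.
  have hy : \sum_(i : hat_index n k) u (oplus_index (ev e k) i) `^ r \in Num.nneg.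
    by rewrite nnegrE sumr_ge0 // => i _; exact: powR_ge0.
  have := @ge0_ler_powR _ r^-1 ri0 _ _ hx hy h.
  by rewrite -powRrM mulfV // powRr1.
pose k0 : 'I_m := Ordinal hm.
pose v := fun e => \big[Num.min/S]_(k < m) beta k (ev e k).
have vb : forall e k, v e <= beta k (ev e k) by move=> e k; exact: bigmin_le.
have v0 : forall e, 0 <= v e by move=> e; apply: le_bigmin => // k _.
have uv : forall e, u e <= v e.
  move=> e; apply: le_bigmin => [|k _]; last exact: ub.
  exact: le_trans (ub e k0) (bS _ _).
have vatt : forall e, exists k, v e = beta k (ev e k).
  move=> e.
  have [k _ hk] := @eq_bigmin _ _ _ S k0 xpredT (fun k => beta k (ev e k)) isT
    (fun k _ => bS _ _).
  by exists k.
pose w := fun e => u e `^ r * v e `^ (- (r / q)).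
have w0 : forall e, 0 <= w e by move=> e; rewrite mulr_ge0 ?powR_ge0.
have Fv : Fmax v <= S.
  rewrite /Fmax /S; apply: ler_sum => k _; apply: ler_sum => j _.
  apply: bigmax_le => // i _.
  by have := vb (oplus_index j i) k; rewrite oplus_k.
have Sw : \sum_e w e <= S.
  apply: (le_trans (y := \sum_e \sum_(k < m) u e `^ r * beta k (ev e k) `^ (- (r / q)))).
    apply: ler_sum => e _; have [k hk] := vatt e.
    rewrite /w hk (bigD1 k) //= lerDl sumr_ge0 // => i _.
    by rewrite mulr_ge0 ?powR_ge0.
  rewrite exchange_big /S; apply: ler_sum => k _.
  rewrite (sum_oplus k); apply: ler_sum => j _.
  under eq_bigr do rewrite oplus_k.
  rewrite -mulr_suml.
  have -> : \sum_(i : hat_index n k) u (oplus_index j i) `^ r = beta k j `^ r.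
    rewrite /beta -powRrM mulVf // powRr1 // sumr_ge0 // => i _.
    exact: powR_ge0.
  have [->|bn0] := eqVneq (beta k j) 0.
    by rewrite powR0 // mul0r.
  rewrite -powRD ?bn0 ?implybT //.
  have E1 : r + - (r / q) = 1.
    rewrite /r; field.
    by rewrite qn0 q1n0.
  rewrite E1.
  by rewrite powRr1.
have key : forall k, u (tau k) * rho R m k `^ q^-1 <=
  m%:R `^ q^-1 * (v (tau k) * rho R m k / m%:R / q + w (tau k) / r).
  move=> k; set e := tau k; set rh := rho R m k.
  have rh0 : 0 <= rh by exact: rho_ge0.
  have [hv|hv] := eqVneq (v e) 0.
    have -> : u e = 0 by apply: le_anti; rewrite u0 -hv uv.
    rewrite mul0r mulr_ge0 ?powR_ge0 // addr_ge0 //.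
      by rewrite !divr_ge0 ?mulr_ge0 ?ler0n // ltW.
    by rewrite divr_ge0 // ltW.
  set A := (v e * rh / m%:R) `^ q^-1.
  set B := u e * v e `^ (- q^-1).
  have A0 : 0 <= A by exact: powR_ge0.
  have B0 : 0 <= B by rewrite mulr_ge0 ?powR_ge0.
  have young := @conjugate_powR R A B q r A0 B0 q0 r0 qr.
  have hAq : A `^ q = v e * rh / m%:R.
    by rewrite /A -powRrM mulVf // powRr1 // divr_ge0 ?mulr_ge0 ?ler0n.
  have hBr : B `^ r = w e.
    rewrite /B powRM ?powR_ge0 // -powRrM /w; congr (_ * _ `^ _).
    by rewrite mulNr mulrC.
  have hAB : m%:R `^ q^-1 * (A * B) = u e * rh `^ q^-1.
    rewrite mulrA (_ : m%:R `^ q^-1 * A = v e `^ q^-1 * rh `^ q^-1); last first.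
      rewrite /A -powRM ?ler0n ?divr_ge0 ?mulr_ge0 ?ler0n //.
      by rewrite mulrC divfK // powRM.
    have hvv : v e `^ q^-1 * v e `^ (- q^-1) = 1.
      by rewrite -powRD ?hv ?implybT // subrr powRr0.
    rewrite /B; transitivity (u e * rh `^ q^-1 * (v e `^ q^-1 * v e `^ (- q^-1))).
      by ring.
    by rewrite hvv mulr1.
  rewrite -hAB ler_wpM2l ?powR_ge0 //.
  by apply: (le_trans young); rewrite hAq hBr.
apply: (le_trans (y := \sum_(k < N) m%:R `^ q^-1 *
  (v (tau k) * rho R m k / m%:R / q + w (tau k) / r))).
  by apply: ler_sum => k _; exact: key.
rewrite -mulr_sumr ler_wpM2l ?powR_ge0 // big_split /= -!mulr_suml.
have hA : (\sum_(i < N) v (tau i) * rho R m i) / m%:R / q <= S / q.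
  rewrite ler_wpM2r ?invr_ge0 ?(ltW q0) // ler_pdivrMr // mulrC.
  apply: le_trans (stepE hm hinj v0) _.
  by rewrite ler_wpM2l // ltW.
have hB : (\sum_(i < N) w (tau i)) / r <= S / r.
  by rewrite ler_wpM2r ?invr_ge0 ?(ltW r0) // (le_trans (injsum hinj w0)).
apply: le_trans (lerD hA hB) _.
by rewrite -mulrDr qr mulr1.
Qed.

Theorem lemma4p3 (R : realType) (m n : nat) (q : R)
  (hm : (1 <= m)%N) (hq : 1 <= q) (a : multi_index m n -> Cplx R) :
  lorentz_p1 (q * m%:R / ((q - 1) * m%:R + 1)) (fun i => cmod (a i))
  <= m%:R `^ q^-1 * \sum_(k < m) mixed_norm k (conj_exp q) a.
Proof.
case: (pickP (@predT (multi_index m n))) => [e0 _|hnone]; last first.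
  have -> : lorentz_p1 (q * m%:R / ((q - 1) * m%:R + 1)) (fun i => cmod (a i)) = 0.
    rewrite /lorentz_p1 /decr_rearr size_sort size_map -cardE (eq_card0 hnone).
    by rewrite big_ord0.
  rewrite mulr_ge0 ?powR_ge0 // sumr_ge0 // => k _.
  exact: mixed_norm_ge0.
have [N [tau [hinj hL]]] := lhs_reduce a e0 hm hq.
apply: le_trans hL _.
move: hq; rewrite le_eqVlt => /predU1P [q1|q1]; last exact: stepQ.
subst q.
rewrite invr1 powRr1 ?ler0n //.
have -> : \sum_(k < m) mixed_norm k (conj_exp 1) a = Fmax (fun e => cmod (a e)).
  by rewrite /conj_exp eqxx.
apply: le_trans (stepE hm hinj (fun e => cmod_ge0 (a e))).
by apply: ler_sum => k _; rewrite powRr1 // rho_ge0.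
Qed.
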